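(* Let $\Omega\subset\mathbb H^n$ be an open, horizontally bounded set, $G_0\subset\Omega$ an open (Euclidean) convex set, $\xi_0\in G_0$, and $c_v<c_b\le0$. Let $V:\mathbb R^{2n+1}\to\mathbb R$ be the slicing cone with vertex $(\xi_0,c_v)$ and base $G_0\cap H_{\xi_0}$ with value $c_b$ on $\partial G_0\cap H_{\xi_0}$ (defined in the context). Then: (i) $B_{\mathbb R^{2n}}(0,r_0)\subset\partial_HV(\xi_0)$, where $r_0=\dfrac{c_b-c_v}{\mathrm{diam}_H(G_0\cap H_{\xi_0})}$; (ii) for every $p$ in the interior of $\partial_HV(\xi_0)$, $$V(\xi)>V(\xi_0)+p\cdot(\mathrm{Pr}_1(\xi)-\mathrm{Pr}_1(\xi_0))\qquad\forall\xi\in(\overline{G_0}\cap H_{\xi_0})\setminus\{\xi_0\}.$$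
   Context: $\mathbb H^n=\mathbb C^n\times\mathbb R\cong\mathbb R^{2n+1}$ with real coordinates $(x,y,t)$, $z=x+iy$, group law $(z,t)\circ(z',t')=(z+z',t+t'+2\,\mathrm{Im}\langle z,z'\rangle)$, $\langle z,z'\rangle=\sum_j z_j\overline{z'_j}$. Dilations $\delta_\lambda(z,t)=(\lambda z,\lambda^2t)$. Horizontal plane at $\xi_0=(x_0,y_0,t_0)$: $H_{\xi_0}=\{(x,y,t):t=t_0+2(x\cdot y_0-x_0\cdot y)\}$ (an affine hyperplane of $\mathbb R^{2n+1}$). $\mathrm{Pr}_1(x,y,t)=(x,y)$. Gauge $N(z,t)=(|z|^4+t^2)^{1/4}$, $d_H(\xi,\zeta)=N(\zeta^{-1}\circ\xi)$, $\mathrm{diam}_H$ the $d_H$-diameter; $\Omega$ horizontally bounded means $\sup\{\mathrm{diam}_H(\Omega\cap H_\xi):\xi\in\Omega\}<\infty$. Slicing cone: for $\eta\in H_{\xi_0}\setminus\{\xi_0\}$ let $\eta^\partial$ be the unique point of $\partial G_0\cap H_{\xi_0}$ on the horizontal ray $\{\xi_0\circ\delta_s(\xi_0^{-1}\circ\eta):s>0\}$, and let $\lambda^\eta=N(\xi_0^{-1}\circ\eta)/N(\xi_0^{-1}\circ\eta^\partial)$ (so $\eta=\xi_0\circ\delta_{\lambda^\eta}(\xi_0^{-1}\circ\eta^\partial)$); set $\lambda^{\xi_0}=0$. For $\xi\in\mathbb R^{2n+1}$ let $\xi^\perp$ be the Euclidean orthogonal projection of $\xi$ onto $H_{\xi_0}$,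 and define $V(\xi)=c_v\bigl(1-(1-\tfrac{c_b}{c_v})\lambda^{\xi^\perp}\bigr)$. Horizontal subdifferential of $V$ (restricted to $\Omega$) at $\xi_0$: $\partial_HV(\xi_0)=\{p\in\mathbb R^{2n}:V(\xi)\ge V(\xi_0)+p\cdot(\mathrm{Pr}_1(\xi)-\mathrm{Pr}_1(\xi_0))\ \forall\xi\in\Omega\cap H_{\xi_0}\}$. *)

(* Defs.v *)
(* Points of H^n = R^(2n+1) are triples (x, y, t)
   with x, y : 'rV[R]_n and t : R; topology = product topology (= Euclidean). *)
From HB Require Import structures.
From mathcomp Require Import all_boot all_order all_algebra.
From mathcomp Require Import all_classical all_reals all_analysis.
Set Implicit Arguments. Unset Strict Implicit. Unset Printing Implicit Defensive.
Import Order.TTheory GRing.Theory Num.Theory.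
Import numFieldNormedType.Exports.
Local Open Scope classical_set_scope.
Local Open Scope ring_scope.

Notation hpt R n := ('rV[R]_n * 'rV[R]_n * R)%type.

Section Heis.
Variables (R : realType) (n : nat).
Local Notation hpt := (hpt R n).

Definition dotv (u v : 'rV[R]_n) : R := \sum_(i < n) u 0 i * v 0 i.

(* Im <z, z'> with z = x + i y, <z,z'> = sum z_j conj(z'_j) *)
Definition imh (a b : hpt) : R := dotv a.1.2 b.1.1 - dotv a.1.1 b.1.2.

Definition hmul (a b : hpt) : hpt :=
  (a.1.1 + b.1.1, a.1.2 + b.1.2, a.2 + b.2 + 2 * imh a b).
Definition hinv (a : hpt) : hpt := (- a.1.1, - a.1.2, - a.2).
Definition hdil (l : R) (a : hpt) : hpt := (l *: a.1.1, l *: a.1.2, l ^+ 2 * a.2).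

Definition gauge (a : hpt) : R :=
  Num.sqrt (Num.sqrt ((dotv a.1.1 a.1.1 + dotv a.1.2 a.1.2) ^+ 2 + a.2 ^+ 2)).
Definition dH (a b : hpt) : R := gauge (hmul (hinv b) a).
Definition diamH (S : set hpt) : R :=
  sup [set r | exists a b, S a /\ S b /\ r = dH a b].

Definition hplane (a0 : hpt) : set hpt :=
  [set a | a.2 = a0.2 + 2 * (dotv a.1.1 a0.1.2 - dotv a0.1.1 a.1.2)].

Definition horiz_bounded (Om : set hpt) : Prop :=
  exists M : R, forall xi, Om xi -> forall a b,
    (Om `&` hplane xi) a -> (Om `&` hplane xi) b -> dH a b <= M.

Definition padd (a b : hpt) : hpt := (a.1.1 + b.1.1, a.1.2 + b.1.2, a.2 + b.2).
Definition pscale (s : R) (a : hpt) : hpt := (s *: a.1.1, s *: a.1.2, s * a.2).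
Definition edot (a b : hpt) : R := dotv a.1.1 b.1.1 + dotv a.1.2 b.1.2 + a.2 * b.2.

Definition econvex (A : set hpt) : Prop :=
  forall a b, A a -> A b -> forall s : R, 0 <= s <= 1 ->
    A (padd (pscale (1 - s) a) (pscale s b)).

Definition boundary (A : set hpt) : set hpt := closure A `\` interior A.

Definition proj_hyp (nu : hpt) (c : R) (a : hpt) : hpt :=
  padd a (pscale (- ((edot nu a - c) / edot nu nu)) nu).
(* H_{xi0} = {v | nu0.v = t0} with Euclidean normal nu0 = (-2 y0, 2 x0, 1) *)
Definition hnormal (a0 : hpt) : hpt := (- (2 *: a0.1.2), 2 *: a0.1.1, 1).
Definition projH (a0 a : hpt) : hpt := proj_hyp (hnormal a0) a0.2 a.

Definition hray (a0 eta : hpt) : set hpt :=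
  [set z | exists s : R, 0 < s /\ z = hmul a0 (hdil s (hmul (hinv a0) eta))].

Definition etab (G0 : set hpt) (a0 eta : hpt) : hpt :=
  xget a0 (boundary G0 `&` hplane a0 `&` hray a0 eta).

Definition lam (G0 : set hpt) (a0 eta : hpt) : R :=
  if eta == a0 then 0
  else gauge (hmul (hinv a0) eta) / gauge (hmul (hinv a0) (etab G0 a0 eta)).

Definition slicing_cone (G0 : set hpt) (a0 : hpt) (cv cb : R) (a : hpt) : R :=
  cv * (1 - (1 - cb / cv) * lam G0 a0 (projH a0 a)).

Definition hpair (p : 'rV[R]_n * 'rV[R]_n) (a a0 : hpt) : R :=
  dotv p.1 (a.1.1 - a0.1.1) + dotv p.2 (a.1.2 - a0.1.2).

Definition hsubdiff (Om : set hpt) (f : hpt -> R) (a0 : hpt)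
  : set ('rV[R]_n * 'rV[R]_n) :=
  [set p | forall a, Om a -> hplane a0 a -> f a0 + hpair p a a0 <= f a].

Definition ball2n (r : R) : set ('rV[R]_n * 'rV[R]_n) :=
  [set p | Num.sqrt (dotv p.1 p.1 + dotv p.2 p.2) < r].

End Heis.

(* Main.v *)
Require Import Defs.
From HB Require Import structures.
From mathcomp Require Import all_boot all_order all_algebra.
From mathcomp Require Import all_classical all_reals all_analysis.
From mathcomp Require Import ring lra.
Set Implicit Arguments. Unset Strict Implicit. Unset Printing Implicit Defensive.
Import Order.TTheory GRing.Theory Num.Theory.
Import numFieldNormedType.Exports.
Local Open Scope classical_set_scope.
Local Open Scope ring_scope.

Section Alg.
Variables (R : realType) (n : nat).
Implicit Types (u w z : 'rV[R]_n).

Lemma dotvC u w : dotv u w = dotv w u.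
Proof. by rewrite /dotv; apply: eq_bigr => i _; rewrite mulrC. Qed.
Lemma dotvDl u w z : dotv (u + w) z = dotv u z + dotv w z.
Proof. by rewrite /dotv -big_split; apply: eq_bigr => i _; rewrite mxE mulrDl. Qed.
Lemma dotvDr u w z : dotv z (u + w) = dotv z u + dotv z w.
Proof. by rewrite dotvC dotvDl !(dotvC z). Qed.
Lemma dotvZl (c : R) u w : dotv (c *: u) w = c * dotv u w.
Proof. by rewrite /dotv mulr_sumr; apply: eq_bigr => i _; rewrite mxE mulrA. Qed.
Lemma dotvZr (c : R) u w : dotv w (c *: u) = c * dotv w u.
Proof. by rewrite dotvC dotvZl dotvC. Qed.
Lemma dotvNl u w : dotv (- u) w = - dotv u w.
Proof. by rewrite -scaleN1r dotvZl mulN1r. Qed.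
Lemma dotvNr u w : dotv w (- u) = - dotv w u.
Proof. by rewrite dotvC dotvNl dotvC. Qed.
Lemma dotv0r u : dotv u 0 = 0.
Proof. by rewrite /dotv big1 // => i _; rewrite mxE mulr0. Qed.
Lemma dotv0l u : dotv 0 u = 0.
Proof. by rewrite dotvC dotv0r. Qed.
Lemma dotv_ge0 u : 0 <= dotv u u.
Proof. by rewrite /dotv sumr_ge0 // => i _; rewrite -expr2 sqr_ge0. Qed.
Lemma dotv_entry u i : (u 0 i) ^+ 2 <= dotv u u.
Proof.
rewrite /dotv (bigD1 i) //= -expr2 lerDl sumr_ge0 // => j _.
by rewrite -expr2 sqr_ge0.
Qed.
End Alg.
Section Pair.
Variables (R : realType) (n : nat).
Local Notation P := ('rV[R]_n * 'rV[R]_n)%type.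
Implicit Types (p q v : P).
Definition pd p q : R := dotv p.1 q.1 + dotv p.2 q.2.
Definition Qn v := pd v v.
Definition Nn v := Num.sqrt (Qn v).
Definition sc (s : R) v : P := (s *: v.1, s *: v.2).
Definition padd2 p q : P := (p.1 + q.1, p.2 + q.2).

Lemma pdC p q : pd p q = pd q p.
Proof. by rewrite /pd dotvC (dotvC p.2). Qed.
Lemma pd_scr s p q : pd p (sc s q) = s * pd p q.
Proof. by rewrite /pd /= !dotvZr mulrDr. Qed.
Lemma pd_scl s p q : pd (sc s p) q = s * pd p q.
Proof. by rewrite pdC pd_scr pdC. Qed.
Lemma pd_addl p q v : pd (padd2 p q) v = pd p v + pd q v.
Proof. by rewrite /pd /= !dotvDl; ring. Qed.
Lemma pd_addr p q v : pd v (padd2 p q) = pd v p + pd v q.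
Proof. by rewrite pdC pd_addl !(pdC v). Qed.
Lemma Qn_ge0 v : 0 <= Qn v.
Proof. by rewrite /Qn /pd addr_ge0 // dotv_ge0. Qed.
Lemma Qn_sc s v : Qn (sc s v) = s ^+ 2 * Qn v.
Proof. by rewrite /Qn pd_scl pd_scr mulrA expr2. Qed.
Lemma Nn_ge0 v : 0 <= Nn v. Proof. exact: sqrtr_ge0. Qed.
Lemma Nn_sc s v : 0 <= s -> Nn (sc s v) = s * Nn v.
Proof. by move=> s0; rewrite /Nn Qn_sc sqrtrM ?sqr_ge0 // sqrtr_sqr ger0_norm. Qed.
Lemma NnE v : Nn v ^+ 2 = Qn v.
Proof. by rewrite /Nn sqr_sqrtr // Qn_ge0. Qed.
Lemma entry1 v i : `|v.1 0 i| <= Nn v.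
Proof.
rewrite /Nn -(sqrtr_sqr (v.1 0 i)) ler_sqrt ?Qn_ge0 //.
rewrite /Qn /pd (le_trans (dotv_entry _ _)) // lerDl dotv_ge0 //.
Qed.
Lemma entry2 v i : `|v.2 0 i| <= Nn v.
Proof.
rewrite /Nn -(sqrtr_sqr (v.2 0 i)) ler_sqrt ?Qn_ge0 //.
rewrite /Qn /pd (le_trans (dotv_entry _ _)) // lerDr dotv_ge0 //.
Qed.
Lemma Qn_eq0 v : Qn v = 0 -> v = (0, 0).
Proof.
move=> Q0; case: v Q0 => v1 v2 Q0; congr pair; apply/matrixP => i j;
  rewrite ord1 mxE; apply/eqP; rewrite -normr_le0.
- by have := entry1 (v1, v2) j; rewrite /Nn Q0 sqrtr0.
- by have := entry2 (v1, v2) j; rewrite /Nn Q0 sqrtr0.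
Qed.

Lemma CS p v r : 0 < r -> Qn p < r ^+ 2 -> 0 < Qn v -> pd p v < r * Nn v.
Proof.
move=> r0 Qp Qv.
have N0 : 0 < Nn v by rewrite /Nn sqrtr_gt0.
set t := Nn v / r.
have t0 : 0 < t by rewrite divr_gt0.
have key : 0 <= Qn (padd2 (sc t p) (sc (-1) v)).
  exact: Qn_ge0.
rewrite /Qn !pd_addl !pd_addr !pd_scl !pd_scr (pdC v p) -/(Qn p) -/(Qn v) in key.
have tr : t * r = Nn v by rewrite /t divfK // gt_eqF.
have NQ := NnE v.
clearbody t.
have h1 : t ^+ 2 * Qn p < t ^+ 2 * r ^+ 2 by rewrite ltr_pM2l // exprn_gt0.
have h2 : t * (pd p v - r * Nn v) < 0 by nra.
by rewrite -subr_lt0; move: h2; rewrite pmulr_rlt0.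
Qed.
End Pair.
Section Geo.
Variables (R : realType) (n : nat) (a0 : hpt R n).
Local Notation P := ('rV[R]_n * 'rV[R]_n)%type.
Local Notation hpt := (hpt R n).
Implicit Types (p q v w : P).
Definition emb v : hpt := hmul a0 (v.1, v.2, 0).
Definition vof (a : hpt) : P := (a.1.1 - a0.1.1, a.1.2 - a0.1.2).
Definition L v : R := 2 * (dotv a0.1.2 v.1 - dotv a0.1.1 v.2).

Lemma emb2 v : (emb v).2 = a0.2 + L v.
Proof. by rewrite /emb /hmul /imh /= addr0. Qed.
Lemma L_sc s v : L (sc s v) = s * L v.
Proof. by rewrite /L /= !dotvZr; ring. Qed.
Lemma emb00 : emb (0, 0) = a0.
Proof.
rewrite /emb /hmul /imh /= !dotv0r !addr0 subr0 mulr0 addr0.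
by case: a0 => [[]].
Qed.
Lemma emb_sc0 v : emb (sc 0 v) = a0.
Proof. by rewrite /sc /= !scale0r emb00. Qed.
Lemma hinv_emb v : hmul (hinv a0) (emb v) = (v.1, v.2, 0).
Proof.
rewrite /hmul /=; congr (_, _, _).
- by rewrite /= addrA addNr add0r.
- by rewrite /= addrA addNr add0r.
rewrite /imh /emb /hmul /= !dotvDr !dotvNl (dotvC a0.1.1 a0.1.2); ring.
Qed.
Lemma gauge_v v : gauge (v.1, v.2, 0) = Nn v.
Proof.
rewrite /gauge /= expr0n /= addr0 sqrtr_sqr ger0_norm //.
exact: (Qn_ge0 v).
Qed.
Lemma dH_emb v : dH (emb v) a0 = Nn v.
Proof. by rewrite /dH hinv_emb gauge_v. Qed.
Lemma hplane_emb v : hplane a0 (emb v).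
Proof.
rewrite /hplane /emb /hmul /imh /= dotvDl dotvDr (dotvC v.1); ring.
Qed.
Lemma plane_vof (a : hpt) : hplane a0 a -> emb (vof a) = a.
Proof.
rewrite /hplane /= => ha; case: a ha => [[a1 a2] t] /= ->.
rewrite /emb /hmul /imh /=.
congr (_, _, _); first (by rewrite addrC subrK); first (by rewrite addrC subrK); rewrite addr0 !dotvDr !dotvNr (dotvC a1 a0.1.2) (dotvC a0.1.2 a0.1.1); ring.
Qed.
Lemma vof_emb v : vof (emb v) = v.
Proof. by rewrite /vof /emb /hmul /= !(addrC a0.1.1) !(addrC a0.1.2) !addrK; case: v. Qed.
Lemma projH_id (a : hpt) : hplane a0 a -> projH a0 a = a.
Proof.
rewrite /hplane /projH /proj_hyp /edot /hnormal /= => ha.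
have -> : dotv (- (2 *: a0.1.2)) a.1.1 + dotv (2 *: a0.1.1) a.1.2 + 1 * a.2 - a0.2 = 0.
  rewrite ha dotvNl !dotvZl (dotvC a0.1.2); ring.
rewrite mul0r oppr0 /pscale /padd /= !scale0r mul0r !addr0.
by case: a {ha} => [[]].
Qed.
Lemma hray_emb v z : hray a0 (emb v) z <-> exists2 s, 0 < s & z = emb (sc s v).
Proof.
rewrite /hray /= hinv_emb /hdil /=.
split => [[s [s0 ->]]|[s s0 ->]]; exists s => //; rewrite /emb /sc /=;
  by rewrite (_ : s ^+ 2 * 0 = 0) // mulr0.
Qed.
Lemma emb_aff th u v :
  padd (pscale (1 - th) a0) (pscale th (emb (sc u v))) = emb (sc (th * u) v).
Proof.
rewrite /padd /pscale !emb2 !L_sc /emb /hmul /=; congr (_, _, _).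
- by rewrite scalerDr addrA -scalerDl subrK scale1r scalerA.
- by rewrite scalerDr addrA -scalerDl subrK scale1r scalerA.
rewrite /imh /L /= !addr0 !dotvZr; ring.
Qed.
Lemma emb_eqa0 v : emb v = a0 -> Qn v = 0.
Proof.
case: v => v1 v2 h.
have /= h1 := congr1 (fun a => a.1.1) h.
have /= h2 := congr1 (fun a => a.1.2) h.
have e1 : v1 = 0 by apply: (@addrI _ a0.1.1); rewrite h1 addr0.
have e2 : v2 = 0 by apply: (@addrI _ a0.1.2); rewrite h2 addr0.
by rewrite /Qn /pd /= e1 e2 dotv0r addr0.
Qed.
End Geo.
Section Topo.
Variables (R : realType) (n : nat).
Local Notation P := ('rV[R]_n * 'rV[R]_n)%type.
Local Notation hpt := (hpt R n).
Definition box (p q : hpt) (e : R) :=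
  (forall i, `|p.1.1 0 i - q.1.1 0 i| < e) /\ (forall i, `|p.1.2 0 i - q.1.2 0 i| < e)
  /\ `|p.2 - q.2| < e.
Definition box2 (p q : P) (e : R) :=
  (forall i, `|p.1 0 i - q.1 0 i| < e) /\ (forall i, `|p.2 0 i - q.2 0 i| < e).

Lemma ballR (x y e : R) : ball x e y <-> `|x - y| < e.
Proof. by rewrite -ball_normE. Qed.

Lemma ball_box (p q : hpt) e : 0 < e -> ball p e q <-> box p q e.
Proof.
move=> e0.
rewrite /ball /= /prod_ball /= /ball /= /prod_ball /= /ball /= /mx_ball /box.
split.
  move=> [[[_ h1] [_ h2]] h3]; split; [|split] => //.
  - by move=> i; apply/ballR; apply: h1.
  - by move=> i; apply/ballR; apply: h2.
move=> [h1 [h2 h3]]; split; [split; split => //|] => //.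
- by move=> i j; rewrite ord1; apply/ballR.
- by move=> i j; rewrite ord1; apply/ballR.
Qed.
Lemma ball_box2 (p q : P) e : 0 < e -> ball p e q <-> box2 p q e.
Proof.
move=> e0.
rewrite /ball /= /prod_ball /= /ball /= /mx_ball /box2.
split.
  move=> [[_ h1] [_ h2]]; split.
  - by move=> i; apply/ballR; apply: h1.
  - by move=> i; apply/ballR; apply: h2.
move=> [h1 h2]; split; split => //.
- by move=> i j; rewrite ord1; apply/ballR.
- by move=> i j; rewrite ord1; apply/ballR.
Qed.

Lemma nbhs_box (p : hpt) (B : set hpt) : nbhs p B ->
  exists2 e, 0 < e & forall q, box p q e -> B q.
Proof.
move/nbhs_ballP => [e /= e0 sub]; exists e => // q bq; apply: sub.
by apply/ball_box.
Qed.
Lemma box_nbhs (p : hpt) e : 0 < e -> nbhs p (fun q => box p q e).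
Proof.
move=> e0; apply/nbhs_ballP; exists e => // q /= bq.
by apply/ball_box.
Qed.
Lemma nbhs_box2 (p : P) (B : set P) : nbhs p B ->
  exists2 e, 0 < e & forall q, box2 p q e -> B q.
Proof.
move/nbhs_ballP => [e /= e0 sub]; exists e => // q bq; apply: sub.
by apply/ball_box2.
Qed.
End Topo.
Section Main.
Variables (R : realType) (n : nat) (Om G0 : set (hpt R n)) (a0 : hpt R n).
Hypotheses (oG0 : open G0) (cG0 : econvex G0) (G0Om : G0 `<=` Om) (G0a0 : G0 a0)
  (hb : horiz_bounded Om).
Local Notation P := ('rV[R]_n * 'rV[R]_n)%type.
Local Notation emb := (emb a0).
Implicit Types (v w : P).

Definition Sv v := [set s : R | 0 <= s /\ G0 (emb (sc s v))].
Definition ss v := sup (Sv v).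
Definition Kv v := Nn v + `|L a0 v| + 1.

Lemma Kv_gt0 v : 0 < Kv v.
Proof. by rewrite /Kv ltr_pwDr // addr_ge0 // Nn_ge0. Qed.

Lemma ray_box v s0 s e : `|s0 - s| * Kv v < e ->
  box (emb (sc s0 v)) (emb (sc s v)) e.
Proof.
move=> h; have hK := Kv_gt0 v.
have E : forall a x y : R, (a + x) - (a + y) = x - y by move=> *; ring.
have le1 : forall x : R, `|x| <= Kv v -> `|s0 * x - s * x| < e.
  move=> x hx; rewrite -mulrBl normrM (le_lt_trans _ h) //.
  by rewrite ler_wpM2l.
split; [|split].
- move=> i; rewrite /emb /hmul /= !mxE E; apply: le1.
  by rewrite /Kv -addrA (le_trans (entry1 v i)) // lerDl addr_ge0.
- move=> i; rewrite /emb /hmul /= !mxE E; apply: le1.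
  by rewrite /Kv -addrA (le_trans (entry2 v i)) // lerDl addr_ge0.
- rewrite !emb2 !L_sc E; apply: le1.
  by rewrite /Kv (addrC (Nn v)) -addrA lerDl addr_ge0 // Nn_ge0.
Qed.
Lemma box0 : exists2 e, 0 < e & forall q, box a0 q e -> G0 q.
Proof. by apply: nbhs_box; move: oG0; rewrite openE; apply. Qed.

Lemma Sv0 v : Sv v 0.
Proof. by split => //; rewrite emb_sc0. Qed.

Lemma Sv_pos v : exists2 s, 0 < s & Sv v s.
Proof.
have [e e0 he] := box0; have hK := Kv_gt0 v.
exists (e / (2 * Kv v)); first by rewrite divr_gt0 // mulr_gt0.
split; first by rewrite ltW // divr_gt0 // mulr_gt0.
apply: he; have := @ray_box v 0 (e / (2 * Kv v)) e; rewrite emb_sc0; apply.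
rewrite sub0r normrN ger0_norm ?ltW ?divr_gt0 ?mulr_gt0 //.
rewrite invfM mulrA mulrAC -mulrA divff ?gt_eqF // mulr1.
by rewrite gtr_pMr // invf_lt1 // ltr1n.
Qed.

Lemma Sv_bound v s : Sv v s ->
  exists M, forall s', Sv v s' -> s' * Nn v <= M.
Proof.
move=> _; case: hb => M hM; exists M => s' [s0 hs].
rewrite -Nn_sc // -(dH_emb a0).
apply: (hM a0 (G0Om G0a0)); split.
- exact: G0Om.
- exact: hplane_emb.
- exact: G0Om.
- by have := hplane_emb a0 (0, 0); rewrite emb00.
Qed.

Lemma Sv_sup v : 0 < Qn v -> has_sup (Sv v).
Proof.
move=> Qv; split; first by exists 0; apply: Sv0.
have [M hM] := Sv_bound (Sv0 v).
have N0 : 0 < Nn v by rewrite /Nn sqrtr_gt0.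
exists (M / Nn v) => s hs; rewrite ler_pdivlMr //; exact: hM.
Qed.

Lemma Sv_ge v s : 0 < Qn v -> Sv v s -> s <= ss v.
Proof. by move=> Qv hs; apply: sup_upper_bound (Sv_sup Qv) _ hs. Qed.

Lemma ss_gt0 v : 0 < Qn v -> 0 < ss v.
Proof. by move=> Qv; have [s s0 hs] := Sv_pos v; apply: lt_le_trans s0 (Sv_ge Qv hs). Qed.

Lemma Sv_lt v s : 0 < Qn v -> 0 <= s -> s < ss v -> Sv v s.
Proof.
move=> Qv s0 slt.
have hs : 0 < ss v - s by rewrite subr_gt0.
have [e [e0 he] hlt] := sup_adherent hs (Sv_sup Qv).
have se : s < e by move: hlt; rewrite opprB addrC subrK.
have ep : 0 < e by apply: le_lt_trans se.
split => //.
have th0 : 0 <= s / e <= 1.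
  by apply/andP; split; [rewrite divr_ge0 // ltW | rewrite ler_pdivrMr // mul1r ltW].
have ne : e != 0 by rewrite gt_eqF.
by have := cG0 G0a0 he th0; rewrite emb_aff divfK.
Qed.

Lemma ss_closure v : 0 < Qn v -> closure G0 (emb (sc (ss v) v)).
Proof.
move=> Qv B /nbhs_box [e e0 he].
have hK := Kv_gt0 v; have sp := ss_gt0 Qv.
set m := Num.min (ss v) (e / Kv v).
have m0 : 0 < m by rewrite lt_min sp divr_gt0.
have mss : m <= ss v by rewrite ge_min lexx.
have me : m * Kv v <= e by rewrite -ler_pdivlMr // ge_min lexx orbT.
have hs : Sv v (ss v - m / 2) by apply: Sv_lt => //; lra.
exists (emb (sc (ss v - m / 2) v)); split; first exact: hs.2.
apply: he; apply: ray_box.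
rewrite (_ : ss v - (ss v - m / 2) = m / 2); last by ring.
rewrite ger0_norm; last by lra.
nra.
Qed.

Lemma ss_notin v : 0 < Qn v -> ~ G0 (emb (sc (ss v) v)).
Proof.
move=> Qv hin.
have hK := Kv_gt0 v; have sp := ss_gt0 Qv.
have : nbhs (emb (sc (ss v) v)) G0 by move: oG0; rewrite openE; apply.
move=> /nbhs_box [e e0 he].
have d0 : 0 < e / (2 * Kv v) by rewrite divr_gt0 // mulr_gt0.
have hs : Sv v (ss v + e / (2 * Kv v)).
  split; first by lra.
  apply: he; apply: ray_box.
  rewrite (_ : ss v - (ss v + e / (2 * Kv v)) = - (e / (2 * Kv v))); last by ring.
  rewrite normrN ger0_norm ?ltW //.
  rewrite invfM mulrA mulrAC -mulrA divff ?gt_eqF // mulr1.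
  by rewrite gtr_pMr // invf_lt1 // ltr1n.
have := Sv_ge Qv hs; lra.
Qed.

Definition aprime (c b : hpt R n) (th : R) : hpt R n :=
  ((1 - th)^-1 *: (c.1.1 - th *: b.1.1), (1 - th)^-1 *: (c.1.2 - th *: b.1.2),
   (c.2 - th * b.2) / (1 - th)).

Lemma aprimeK (c b : hpt R n) th : th != 1 ->
  padd (pscale (1 - th) (aprime c b th)) (pscale th b) = c.
Proof.
move=> th1; have h : 1 - th != 0 by rewrite subr_eq0 eq_sym.
case: c => [[c1 c2] ct]; rewrite /padd /pscale /aprime /=.
congr (_, _, _); first (by rewrite scalerA mulfV // scale1r subrK);
  first (by rewrite scalerA mulfV // scale1r subrK).
by field.
Qed.

Lemma real_seg (x b bp th eps : R) : 0 <= th -> th < 1 -> 0 < eps ->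
  `|(x + b) - bp| < eps * (1 - th) ->
  `|x - (1 - th)^-1 * ((x + th * b) - th * bp)| < eps.
Proof.
move=> th0 th1 e0 h.
have h1 : 1 - th != 0 by rewrite subr_eq0 eq_sym lt_eqF.
rewrite (_ : x - _ = - (th / (1 - th)) * ((x + b) - bp)); last by field.
rewrite normrM normrN (@ger0_norm _ (th / (1 - th))); last by rewrite divr_ge0 // subr_ge0 ltW.
have pos : 0 < 1 - th by rewrite subr_gt0.
apply: (@le_lt_trans _ _ (th / (1 - th) * (eps * (1 - th)))).
  by apply: ler_wpM2l; [rewrite divr_ge0 // ltW | exact: ltW].
rewrite (_ : th / (1 - th) * (eps * (1 - th)) = th * eps); last by field.
nra.
Qed.

Lemma closure_seg w th : closure G0 (emb w) -> 0 <= th -> th < 1 ->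
  G0 (emb (sc th w)).
Proof.
move=> cl th0 th1.
have [e e0 he] := box0.
have d0 : 0 < e * (1 - th) by rewrite mulr_gt0 // subr_gt0.
have [bp [Gbp [b1 [b2 b3]]]] := cl _ (box_nbhs (emb w) d0).
have thn1 : th != 1 by rewrite lt_eqF.
rewrite -(aprimeK (emb (sc th w)) bp thn1).
apply: cG0 => //; last by apply/andP; split; [|rewrite ltW].
apply: he; split; [|split].
- move=> i; rewrite /aprime /= !mxE; have := b1 i; rewrite /emb /hmul /= !mxE.
  exact: real_seg.
- move=> i; rewrite /aprime /= !mxE; have := b2 i; rewrite /emb /hmul /= !mxE.
  exact: real_seg.
- rewrite /aprime; rewrite [X in `|_ - (X.2 - _) / _|]/= emb2 L_sc mulrC.
  move: b3; rewrite emb2; exact: real_seg.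
Qed.

Lemma iG0 : interior G0 = G0.
Proof. exact/interior_id. Qed.

Lemma sc_sc a b v : sc a (sc b v) = sc (a * b) v.
Proof. by rewrite /sc /= !scalerA. Qed.

Lemma boundary_uniq v s : 0 < Qn v -> 0 < s ->
  boundary G0 (emb (sc s v)) -> s = ss v.
Proof.
move=> Qv s0 [cl]; rewrite iG0 => nint.
have sp := ss_gt0 Qv.
case: (ltgtP s (ss v)) => // [lt|gt].
  by case: nint; exact: (Sv_lt Qv (ltW s0) lt).2.
set u := (s + ss v) / 2.
have th0 : 0 <= u / s by rewrite divr_ge0 // ltW // /u divr_gt0 // addr_gt0.
have th1 : u / s < 1 by rewrite ltr_pdivrMr // mul1r /u; lra.
have := closure_seg cl th0 th1; rewrite sc_sc divfK ?gt_eqF // => hu.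
have : Sv v u by split => //; rewrite /u; lra.
move/(Sv_ge Qv); rewrite /u; lra.
Qed.

Lemma etab_emb v c : 0 < Qn v -> 0 < c ->
  etab G0 a0 (emb (sc c v)) = emb (sc (ss v) v).
Proof.
move=> Qv c0; have sp := ss_gt0 Qv.
rewrite /etab; apply: xget_unique.
  split; [split|].
  - split; first exact: ss_closure.
    by rewrite iG0; exact: ss_notin.
  - exact: hplane_emb.
  - apply/hray_emb; exists (ss v / c); first by rewrite divr_gt0.
    by rewrite sc_sc divfK ?gt_eqF.
move=> y [[bd _] /hray_emb [s s0 ey]]; subst y.
rewrite sc_sc in bd *; congr (emb (sc _ v)).
by apply: (boundary_uniq Qv _ bd); rewrite mulr_gt0.
Qed.

Lemma lam_emb v c : 0 < Qn v -> 0 < c -> lam G0 a0 (emb (sc c v)) = c / ss v.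
Proof.
move=> Qv c0; have sp := ss_gt0 Qv.
have N0 : 0 < Nn v by rewrite /Nn sqrtr_gt0.
rewrite /lam; case: eqP => [/emb_eqa0|_].
  by rewrite Qn_sc => /eqP; rewrite mulf_eq0 expf_eq0 !gt_eqF.
rewrite etab_emb // !hinv_emb !gauge_v !Nn_sc ?ltW //.
by field; rewrite !gt_eqF.
Qed.

Lemma plane_a0 : hplane a0 a0.
Proof. by have := hplane_emb a0 (0, 0); rewrite emb00. Qed.

Lemma V_a0 cv cb : slicing_cone G0 a0 cv cb a0 = cv.
Proof.
rewrite /slicing_cone projH_id; last exact: plane_a0.
rewrite /lam [X in if X then _ else _](_ : _ = true); last by apply/eqP.
by rewrite mulr0 subr0 mulr1.
Qed.

Lemma V_emb cv cb v c : cv != 0 -> 0 < Qn v -> 0 < c ->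
  slicing_cone G0 a0 cv cb (emb (sc c v)) = cv + (cb - cv) * (c / ss v).
Proof.
move=> cv0 Qv c0; have sp := ss_gt0 Qv.
rewrite /slicing_cone projH_id; last exact: hplane_emb.
rewrite lam_emb //.
by field; rewrite cv0 gt_eqF.
Qed.

Lemma vof_pos a : hplane a0 a -> a <> a0 -> 0 < Qn (vof a0 a).
Proof.
move=> ha ne; rewrite lt_neqAle Qn_ge0 andbT eq_sym; apply/eqP => /Qn_eq0 h.
by apply: ne; rewrite -(plane_vof ha) h emb00.
Qed.

Lemma sc1 v : sc 1 v = v.
Proof. by rewrite /sc !scale1r; case: v. Qed.

Lemma a_emb a : hplane a0 a -> a = emb (sc 1 (vof a0 a)).
Proof. by move=> ha; rewrite sc1 plane_vof. Qed.

Lemma D_bound v : 0 < Qn v -> ss v * Nn v <= diamH (G0 `&` hplane a0).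
Proof.
move=> Qv; have N0 : 0 < Nn v by rewrite /Nn sqrtr_gt0.
set E := [set r | exists a b, (G0 `&` hplane a0) a /\ (G0 `&` hplane a0) b /\ r = dH a b].
have hub : has_ubound E.
  case: hb => M hM; exists M => r [a [b [[Ga Ha] [[Gb Hb] ->]]]].
  by apply: (hM a0 (G0Om G0a0)); split => //; apply: G0Om.
have hs : forall s, Sv v s -> s * Nn v <= diamH (G0 `&` hplane a0).
  move=> s [s0 Gs]; rewrite -Nn_sc // -(dH_emb a0).
  apply: (ub_le_sup hub); exists (emb (sc s v)), a0; split.
    by split => //; exact: hplane_emb.
  by split => //; split => //; exact: plane_a0.
rewrite -ler_pdivlMr //; apply: ge_sup; first by exists 0; exact: Sv0.
by move=> s /hs; rewrite ler_pdivlMr.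
Qed.

Lemma main_i cv cb : cv < cb -> cb <= 0 ->
  ball2n (n:=n) ((cb - cv) / diamH (G0 `&` hplane a0))
    `<=` hsubdiff Om (slicing_cone G0 a0 cv cb) a0.
Proof.
move=> cvb cb0 p hp a Oa Ha.
have cv0 : cv != 0 by rewrite lt_eqF // (lt_le_trans cvb).
rewrite V_a0.
have [->|ne] := eqVneq a a0.
  by rewrite V_a0 /hpair !subrr !dotv0r !addr0.
have Qv := vof_pos Ha (elimN eqP ne).
have hpv : hpair p a a0 = pd p (vof a0 a) by [].
rewrite hpv; set v := vof a0 a; rewrite (a_emb Ha) -/v V_emb //.
have sp := ss_gt0 Qv.
have N0 : 0 < Nn v by rewrite /Nn sqrtr_gt0.
have DB := D_bound Qv.
set D := diamH _ in hp DB *.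
have D0 : 0 < D by apply: lt_le_trans DB; rewrite mulr_gt0.
have cvb0 : 0 < cb - cv by rewrite subr_gt0.
set r0 := (cb - cv) / D in hp *.
have hpN : Nn p < r0 := hp.
have r00 : 0 < r0 by apply: le_lt_trans hpN; exact: Nn_ge0.
have Qp : Qn p < r0 ^+ 2 by rewrite -NnE; have := Nn_ge0 p; nra.
have cs := CS r00 Qp Qv.
have h1 : Nn v / D <= 1 / ss v.
  by rewrite ler_pdivrMr // mul1r ler_pdivlMl // mulrC.
have h2 : r0 * Nn v <= (cb - cv) * (1 / ss v).
  by rewrite /r0 mulrAC -mulrA ler_wpM2l // ltW.
rewrite lerD2l; apply: ltW; exact: lt_le_trans h2.
Qed.

Lemma main_ii cv cb : cv < cb -> cb <= 0 ->
  forall p, interior (hsubdiff Om (slicing_cone G0 a0 cv cb) a0) p ->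
  forall xi, (closure G0 `&` hplane a0) xi -> xi <> a0 ->
  slicing_cone G0 a0 cv cb a0 + hpair p xi a0 < slicing_cone G0 a0 cv cb xi.
Proof.
move=> cvb cb0 p /nbhs_box2 [e e0 he] xi [_ Hxi] ne.
have cv0 : cv != 0 by rewrite lt_eqF // (lt_le_trans cvb).
have Qv := vof_pos Hxi ne.
have hpv : hpair p xi a0 = pd p (vof a0 xi) by [].
rewrite hpv; set v := vof a0 xi in Qv *; rewrite (a_emb Hxi) -/v V_emb // V_a0.
have sp := ss_gt0 Qv.
have N0 : 0 < Nn v by rewrite /Nn sqrtr_gt0.
rewrite ltNge; apply/negP => H.
clearbody v.
set d := e / (2 * (Nn v + 1)).
have d0 : 0 < d by rewrite divr_gt0 // mulr_gt0 // addr_gt0.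
have dN : d * Nn v < e.
  rewrite /d mulrAC ltr_pdivrMr ?mulr_gt0 ?addr_gt0 //; nra.
have bp : box2 p (padd2 p (sc d v)) e.
  have key : forall x y : R, `|y| <= Nn v -> `|x - (x + d * y)| < e.
    move=> x y hy; rewrite opprD addrA subrr add0r normrN normrM ger0_norm ?ltW //.
    by apply: le_lt_trans dN; rewrite ler_wpM2l // ltW.
  split => i; rewrite /= !mxE; apply: key; [exact: entry1 | exact: entry2].
have Su : Sv v (ss v / 2) by apply: Sv_lt => //; lra.
have := he _ bp (emb (sc (ss v / 2) v)) (G0Om Su.2) (hplane_emb _ _).
rewrite V_a0 V_emb ?divr_gt0 //.
rewrite (_ : hpair _ _ _ = pd (padd2 p (sc d v)) (sc (ss v / 2) v)); last first.
  by rewrite /hpair -/(pd _ (vof a0 _)) vof_emb.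
rewrite pd_addl !pd_scr pd_scl -/(Qn v).
have E : (cb - cv) * (ss v / 2 / ss v) = ss v / 2 * ((cb - cv) * (1 / ss v)).
  by field; rewrite gt_eqF.
rewrite E.
move: H; set X := (cb - cv) * (1 / ss v); set u := ss v / 2.
have u0 : 0 < u by rewrite /u divr_gt0.
have : 0 < u * (d * Qn v) by apply: mulr_gt0 => //; apply: mulr_gt0.
nra.
Qed.
End Main.

Theorem proposition3p3 (R : realType) (n : nat)
  (Om G0 : set (hpt R n)) (xi0 : hpt R n) (cv cb : R) :
  open Om -> horiz_bounded Om ->
  open G0 -> econvex G0 -> G0 `<=` Om -> G0 xi0 ->
  cv < cb -> cb <= 0 ->
  let V := slicing_cone G0 xi0 cv cb in
  let r0 := (cb - cv) / diamH (G0 `&` hplane xi0) in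
  ball2n (n:=n) r0 `<=` hsubdiff Om V xi0 /\
  (forall p, interior (hsubdiff Om V xi0) p ->
     forall xi, (closure G0 `&` hplane xi0) xi -> xi <> xi0 ->
       V xi0 + hpair p xi xi0 < V xi).
Proof.
move=> oOm hb oG0 cG0 G0Om G0a0 cvb cb0 V r0; split.
  exact: main_i.
exact: main_ii.
Qed.
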